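(* Let $k\ge1$. Every triangulation of $\mathbb{S}^3$ whose $1$-skeleton has a proper $(R_k(3)-1)$-colouring has a $k$-edge-colouring without monochromatic faces.
   Context: A triangulation of $\mathbb{S}^3$ is a simplicial $2$-complex embedded in $\mathbb{S}^3$ such that every connected component of its complement is a tetrahedron. Its faces are its $2$-cells. $R_k(3)$ is the smallest $n$ such that every $k$-edge-colouring of $K_n$ contains a monochromatic triangle. A $k$-edge-colouring is an arbitrary assignment of one of $k$ colours to each edge; a face is monochromatic if all edges on its boundary have the same colour. *)

(* Defs.v *)
From HB Require Import structures.
From mathcomp Require Import all_boot all_order all_algebra.
From mathcomp Require Import all_classical all_reals all_analysis.
From mathcomp Require Import Rstruct Rstruct_topology.
Set Implicit Arguments. Unset Strict Implicit. Unset Printing Implicit Defensive.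
Import Order.TTheory GRing.Theory Num.Theory.
Local Open Scope classical_set_scope.
Local Open Scope ring_scope.

Notation Rl := Rdefinitions.R.

Definition mono_set (V : finType) (k : nat) (col : {set V} -> 'I_k) (t : {set V}) :=
  exists c : 'I_k, forall e : {set V}, e \subset t -> #|e| = 2 -> col e = c.

Definition ramsey_tri (k N : nat) : Prop :=
  forall col : {set 'I_N} -> 'I_k,
    exists t : {set 'I_N}, #|t| = 3 /\ mono_set col t.

Definition is_Rk3 (k r : nat) : Prop :=
  ramsey_tri k r /\ forall N, ramsey_tri k N -> (r <= N)%N.

Definition simplicial_2complex (n : nat) (E F : {set {set 'I_n}}) : Prop :=
  (forall e, e \in E -> #|e| = 2) /\
  (forall t, t \in F -> #|t| = 3) /\
  (forall (t e : {set 'I_n}), t \in F -> e \subset t -> #|e| = 2 -> e \in E).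

Definition is_simplex (n : nat) (E F : {set {set 'I_n}}) (s : {set 'I_n}) : bool :=
  [|| #|s| == 1%N, s \in E | s \in F].

(* geometric realisation, in barycentric coordinates inside R^n *)
Definition realization (n : nat) (E F : {set {set 'I_n}}) : set 'rV[Rl]_n :=
  [set b | (forall i, 0 <= b 0 i) /\ \sum_i b 0 i = 1 /\
           exists s, is_simplex E F s /\ forall i, b 0 i != 0 -> i \in s].

Definition S3 : set 'rV[Rl]_4 := [set x | \sum_i (x 0 i) ^+ 2 = 1].

Definition embeds_in_S3 (n : nat) (E F : {set {set 'I_n}})
    (phi : 'rV[Rl]_n -> 'rV[Rl]_4) : Prop :=
  {within realization E F, continuous phi} /\
  {in realization E F &, injective phi} /\
  phi @` realization E F `<=` S3.

Definition simplex3 : set 'rV[Rl]_4 :=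
  [set y | (forall j, 0 <= y 0 j) /\ \sum_j y 0 j = 1].
Definition open_simplex3 : set 'rV[Rl]_4 :=
  [set y | (forall j, 0 < y 0 j) /\ \sum_j y 0 j = 1].
Definition bd_simplex3 : set 'rV[Rl]_4 := simplex3 `\` open_simplex3.

(* linear map sending the j-th vertex of the standard 3-simplex to vertex a j *)
Definition lift_bary (n : nat) (a : 'I_4 -> 'I_n) (y : 'rV[Rl]_4) : 'rV[Rl]_n :=
  \row_(i < n) \sum_(j < 4 | a j == i) y 0 j.

(* C is a tetrahedron of the embedded complex: there are four vertices all of
   whose triangles are faces, and a homeomorphism from the closed 3-simplex
   onto the closure of C, mapping the open simplex onto C and the boundary
   onto the four (embedded) triangles, compatibly with the embedding. *)
Definition is_tetrahedron (n : nat) (E F : {set {set 'I_n}})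
    (phi : 'rV[Rl]_n -> 'rV[Rl]_4) (C : set 'rV[Rl]_4) : Prop :=
  exists a : 'I_4 -> 'I_n,
    injective a /\ (forall j : 'I_4, a @: [set~ j] \in F) /\
    exists psi : 'rV[Rl]_4 -> 'rV[Rl]_4,
      {within simplex3, continuous psi} /\
      {in simplex3 &, injective psi} /\
      psi @` open_simplex3 = C /\
      (forall y, bd_simplex3 y -> psi y = phi (lift_bary a y)).

Definition triangulation_S3 (n : nat) (E F : {set {set 'I_n}}) : Prop :=
  simplicial_2complex E F /\
  exists phi : 'rV[Rl]_n -> 'rV[Rl]_4,
    embeds_in_S3 E F phi /\
    let K := S3 `\` (phi @` realization E F) in
    forall x, K x -> is_tetrahedron E F phi (connected_component K x).

Definition proper_colouring (n m : nat) (E : {set {set 'I_n}}) : Prop :=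
  exists c : 'I_n -> 'I_m, forall u v : 'I_n, [set u; v]%SET \in E -> c u != c v.

(* Main.v *)
Require Import Defs.
From HB Require Import structures.
From mathcomp Require Import all_boot all_order all_algebra.
From mathcomp Require Import all_classical all_reals all_analysis.
From mathcomp Require Import Rstruct Rstruct_topology.
From Stdlib Require Import Classical.
From mathcomp Require Import zify.
From Stdlib Require Import Lia.

Theorem corollary6p2 (k : nat) (hk : (1 <= k)%N) (r : nat) (hr : is_Rk3 k r)
  (n : nat) (E F : {set {set 'I_n}}) (hT : triangulation_S3 E F)
  (hc : proper_colouring (r - 1) E) :
  exists f : {set 'I_n} -> 'I_k, forall t, t \in F -> ~ mono_set f t.
Proof.
have nR : ~ ramsey_tri k (r - 1).
  move=> H; have := hr.2 _ H => le.
  have r0 : r = 0%N by lia.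
  have := hr.1; rewrite r0 => /(_ (fun _ => Ordinal hk)) [t [t3 _]].
  have := max_card t; rewrite card_ord t3 //.
have [col' Hcol] : exists col' : {set 'I_(r-1)} -> 'I_k,
    forall t : {set 'I_(r-1)}, ~ (#|t| = 3%N /\ mono_set col' t).
  apply: NNPP => H; apply: nR => col; apply: NNPP => H2; apply: H.
  by exists col => t Ht; apply: H2; exists t.
case: hT => [[hE [hF hFE]] _].
case: hc => c hc.
exists (fun e : {set 'I_n} => col' (c @: e)) => t tF [c0 Hm].
have injt : {in t &, injective c}.
  move=> u v ut vt cuv; apply/eqP; apply/negPn/negP => uv.
  have e2 : #|[set u; v]%SET| = 2%N by rewrite cards2 uv.
  have sub : [set u; v]%SET \subset t by apply/fintype.subsetP => x; rewrite !inE => /orP [] /eqP ->.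
  by have := hc u v (hFE _ _ tF sub e2); rewrite cuv eqxx.
apply: (Hcol (c @: t)); split.
  by rewrite card_in_imset // hF.
exists c0 => e' se' e'2.
pose e := t :&: c @^-1: e'.
have ee : c @: e = e'.
  apply/setP => x; apply/imsetP/idP.
    by case=> y; rewrite !inE => /andP [_ ?] ->.
  move=> xe; have /imsetP [y yt xy] := fintype.subsetP se' x xe.
  by exists y => //; rewrite !inE yt -xy.
have ste : e \subset t by apply: subsetIl.
have e2 : #|e| = #|e'|.
  rewrite -ee card_in_imset //.
  by move=> u v ue ve; apply: injt; apply: (fintype.subsetP ste).
rewrite -ee; apply: (Hm e ste); exact: (etrans e2 e'2).
Qed.
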